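(* Let $m\in\mathbb{N}$, $m\geq 2$, let $G$ be an abelian (locally compact) group, let $(X,G)$ and $(X',G)$ be minimal continuous actions, and let $\pi\colon X\to X'$ be a factor map. If $\pi$ is an $m$-MEF map, then $(X',G)$ is $m$-equicontinuous.
   Context: Actions are continuous actions on compact metric spaces; a factor map is a continuous equivariant surjection. For a surjection $\varphi\colon X\to Y$, $R_\varphi$ is the equivalence relation $x\sim y\iff\varphi(x)=\varphi(y)$ and $X/\varphi$ denotes the set of its equivalence classes. $\pi_{eq}\colon X\to X_{eq}$ is the factor map onto the maximal equicontinuous factor of $(X,G)$ (the equicontinuous factor of which every equicontinuous factor is a factor). A factor map $\pi\colon X\to X'$ is an $m$-MEF map if every class $A\in X/\pi_{eq}$ is a union $A=\bigcup_{i=1}^{m-1}B_i$ of $m-1$ (not necessarily distinct) classes $B_i\in X/\pi$. $(X',G)$ is $m$-equicontinuous if for every $x\in X'$ and $\varepsilon>0$ there is $\delta>0$ such that for any $x_1,\dots,x_m$ in the open ball $B_\delta(x)$ and every $g\in G$ there exist $i\neq j$ with $d(gx_i,gx_j)<\varepsilon$. *)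

(* Defs.v *)
From HB Require Import structures.
From mathcomp Require Import all_boot all_order all_algebra.
From mathcomp Require Import all_classical all_reals topology normedtype tvs.
Set Implicit Arguments. Unset Strict Implicit. Unset Printing Implicit Defensive.
Import Order.TTheory GRing.Theory Num.Theory.
Local Open Scope classical_set_scope.
Local Open Scope ring_scope.

Section Dyn.
Variables (R : realType) (G : topologicalZmodType).

(* X is a compact metric space: a compact Hausdorff (pseudo)metric space *)
Definition compact_metric (X : pseudoMetricType R) : Prop :=
  hausdorff_space X /\ compact [set: X].

Definition is_action (X : topologicalType) (act : G -> X -> X) : Prop :=
  [/\ (forall x, act 0 x = x),
      (forall g h x, act (g + h) x = act g (act h x)) &
      continuous (fun p : G * X => act p.1 p.2)].

Definition minimal_action (X : topologicalType) (act : G -> X -> X) : Prop :=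
  forall x : X, closure (range (fun g => act g x)) = [set: X].

Definition factor_map (X Y : topologicalType) (actX : G -> X -> X)
    (actY : G -> Y -> Y) (p : X -> Y) : Prop :=
  [/\ continuous p, (forall y : Y, exists x : X, p x = y) &
      (forall g x, p (actX g x) = actY g (p x))].

Definition equicontinuous_action (X : pseudoMetricType R) (act : G -> X -> X)
  : Prop :=
  forall (x : X) (e : R), 0 < e -> exists2 d : R, 0 < d &
    forall y : X, ball x d y -> forall g : G, ball (act g x) e (act g y).

Definition is_MEF_map (X Xeq : pseudoMetricType R) (actX : G -> X -> X)
    (actEq : G -> Xeq -> Xeq) (peq : X -> Xeq) : Prop :=
  [/\ factor_map actX actEq peq, equicontinuous_action actEq &
      forall (Z : pseudoMetricType R) (actZ : G -> Z -> Z) (psi : X -> Z),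
        compact_metric Z -> is_action actZ -> factor_map actX actZ psi ->
        equicontinuous_action actZ ->
        exists theta : Xeq -> Z,
          factor_map actEq actZ theta /\ forall x, psi x = theta (peq x)].

(* m-MEF map: every class of R_{peq} is a union of m-1 (not necessarily
   distinct) classes of R_p *)
Definition mMEF_map (m : nat) (X Xeq X' : Type) (peq : X -> Xeq) (p : X -> X')
  : Prop :=
  forall x : X, exists b : 'I_m.-1 -> X,
    [set y | peq y = peq x] = \bigcup_(i in [set: 'I_m.-1]) [set y | p y = p (b i)].

Definition m_equicontinuous (m : nat) (X : pseudoMetricType R)
    (act : G -> X -> X) : Prop :=
  forall (x : X) (e : R), 0 < e -> exists2 d : R, 0 < d &
    forall xs : 'I_m -> X, (forall i, ball x d (xs i)) ->
      forall g : G, exists i j : 'I_m, i != j /\ ball (act g (xs i)) e (act g (xs j)).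

End Dyn.

(* Main.v *)
Require Import Defs.
From HB Require Import structures.
From mathcomp Require Import all_boot all_order all_algebra.
From mathcomp Require Import all_classical all_reals topology normedtype tvs.
Import Order.TTheory GRing.Theory Num.Theory.
Local Open Scope classical_set_scope.
Local Open Scope ring_scope.

Lemma ultra_cvg_compact {T : Type} {X : topologicalType} {U : set_system T} (f : T -> X) :
  UltraFilter U -> compact [set: X] -> exists c : X, f @ U --> c.
Proof.
move=> UU cX.
have [c [_ cc]] := cX (f @ U) _ filterT.
exists c => N Nc.
case: (in_ultra_setVsetC (f @^-1` N) UU) => // HN.
have [y [Hy Ny]] := cc (~` N) N HN Nc.
by case: Hy.
Qed.

Theorem lemma4p14 (R : realType) (m : nat) (G : topologicalZmodType)
    (X X' Xeq : pseudoMetricType R)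
    (actX : G -> X -> X) (actX' : G -> X' -> X') (actEq : G -> Xeq -> Xeq)
    (p : X -> X') (peq : X -> Xeq) :
  (2 <= m)%N ->
  locally_compact [set: G] ->
  compact_metric X -> compact_metric X' -> compact_metric Xeq ->
  is_action actX -> is_action actX' -> is_action actEq ->
  minimal_action actX -> minimal_action actX' ->
  factor_map actX actX' p ->
  is_MEF_map actX actEq peq ->
  mMEF_map m peq p ->
  m_equicontinuous m actX'.
Proof.
move=> hm _ [hX cX] [hX' cX'] [hE cE] _ _ _ _ _ [pc psurj pv]
  [[peqc _ peqv] eqE _] hmef.
have fib : forall a b, p a = p b -> peq a = peq b.
  move=> a b hab; have [bb Hb] := hmef b.
  have : [set y | peq y = peq b] b by [].
  rewrite Hb => -[k _ Hk].
  have : (\bigcup_(i in [set: 'I_m.-1]) [set y | p y = p (bb i)]) a.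
    by exists k => //=; rewrite hab.
  by rewrite -Hb.
move=> x' e he.
apply: contrapT => Hn.
have Hbad : forall d : R, exists xg : ('I_m -> X') * G, 0 < d ->
    (forall i, ball x' d (xg.1 i)) /\
    forall i j, i != j -> ~ ball (actX' xg.2 (xg.1 i)) e (actX' xg.2 (xg.1 j)).
  move=> d; case: (pselect (0 < d)) => hd; last by exists ((fun _ => x'), 0).
  case: (pselect (exists xs : 'I_m -> X', (forall i, ball x' d (xs i)) /\
     exists g, forall i j, i != j -> ~ ball (actX' g (xs i)) e (actX' g (xs j))))
    => [[xs [H1 [g H2]]]|H]; first by exists (xs, g).
  exfalso; apply: Hn; exists d => // xs H1 g.
  apply: contrapT => H3; apply: H; exists xs; split => //; exists g => i j hij hb.
  by apply: H3; exists i, j.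
have [xg Hxg] := choice Hbad.
have [L HL] := choice psurj.
pose xs d := (xg d).1; pose g d := (xg d).2.
have [U [UU HU]] := @ultraFilterLemma R (0^'+) _.
have PU : ProperFilter U := @ultra_proper _ _ UU.
have Hpos : U [set d | 0 < d] := HU _ (nbhs_right_gt 0).
have Hxs : forall i, (fun d => xs d i) @ U --> x'.
  move=> i; apply/cvg_ballP => eps heps.
  have H2 : U [set d : R | d < eps] := HU _ (nbhs_right_lt heps).
  apply: filterS (filterI Hpos H2) => d [hd hde].
  have [H1 _] := Hxg d hd.
  exact: (le_ball (ltW hde)) (H1 i).
pose c := peq (L x').
have [zl Hzl] := choice (fun i => ultra_cvg_compact (fun d => L (xs d i)) UU cX).
have [ul Hul] := choice (fun i => ultra_cvg_compact (fun d => actX (g d) (L (xs d i))) UU cX).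
have [w Hw] := ultra_cvg_compact (fun d => actEq (g d) c) UU cE.
have pzl : forall i, p (zl i) = x'.
  move=> i; apply: (cvg_unique hX' _ (Hxs i)) => /=.
  have -> : (fun d => xs d i) = p \o (fun d => L (xs d i)).
    by apply: funext => d /=; rewrite HL.
  exact: (continuous_cvg _ (pc (zl i)) (Hzl i)).
have Hc : forall i, (fun d => peq (L (xs d i))) @ U --> c.
  move=> i; have -> : c = peq (zl i) by apply: fib; rewrite pzl HL.
  exact: (continuous_cvg _ (peqc (zl i)) (Hzl i)).
have Hul_w : forall i, peq (ul i) = w.
  move=> i; apply: (cvg_unique hE (continuous_cvg _ (peqc (ul i)) (Hul i))).
  apply/cvg_ballP => eps heps.
  have heps2 : 0 < eps / 2 by rewrite divr_gt0.
  have [dl hdl Hdl] := eqE c (eps / 2) heps2.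
  have H1 := @cvg_ball _ _ _ U PU _ _ (Hc i) _ hdl.
  have H2 := @cvg_ball _ _ _ U PU _ _ Hw _ heps2.
  apply: filterS (filterI H1 H2) => d [hd1 hd2] /=.
  rewrite peqv (splitr eps).
  exact: ball_triangle hd2 (Hdl _ hd1 (g d)).
have m0 : (0 < m)%N by apply: ltnW.
pose i0 : 'I_m := Ordinal m0.
have [b Hb] := hmef (ul i0).
have Hk : forall i, exists k, p (ul i) = p (b k).
  move=> i; have : [set y | peq y = peq (ul i0)] (ul i) by rewrite /= !Hul_w.
  by rewrite Hb => -[k _ Hk]; exists k.
have [kf Hkf] := choice Hk.
have [i [j [hij hk]]] : exists i j, i != j /\ kf i = kf j.
  apply: contrapT => H.
  have inj : injective kf.
    move=> i j hij; apply: contrapT => hn; apply: H; exists i, j; split => //.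
    exact/eqP.
  have := leq_card kf inj; rewrite !card_ord.
  by rewrite leqNgt ltn_predL m0.
have pij : p (ul i) = p (ul j) by rewrite !Hkf hk.
have Ha : forall i, (fun d => actX' (g d) (xs d i)) @ U --> p (ul i).
  move=> k; have -> : (fun d => actX' (g d) (xs d k)) =
      p \o (fun d => actX (g d) (L (xs d k))).
    by apply: funext => d /=; rewrite pv HL.
  exact: (continuous_cvg _ (pc _) (Hul k)).
have he2 : 0 < e / 2 by rewrite divr_gt0.
have H1 := @cvg_ball _ _ _ U PU _ _ (Ha i) _ he2.
have H2 := @cvg_ball _ _ _ U PU _ _ (Ha j) _ he2.
have [d [hd [h1 h2]]] := filter_ex (filterI Hpos (filterI H1 H2)).
apply: ((Hxg d hd).2 i j hij).
rewrite (splitr e); apply: (ball_triangle (ball_sym h1)).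
by rewrite pij.
Qed.
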